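(* Let $k\ge 1$ and $n \ge 3k+1$ be integers, and let $W_n$ be the squared cycle graph on $[n]=\{1,\dots,n\}$. Then every subset $A\subseteq [n]$ with $|A| = 3k-2$ contains an independent set of size $k$ of $W_n$. Consequently, every subset of $[n]$ of cardinality at most $n-3k+2$ is a face of the total cut complex $\Delta_k^t(W_n)$.
   Context: The squared cycle graph $W_n$ is the graph with vertex set $[n]$ and edge set $\{\{i,i+1 \bmod n\},\{i,i+2 \bmod n\} : i=1,\dots,n\}$. An independent set of size $k$ (a $k$-independent set) is a set of $k$ pairwise non-adjacent vertices. For a graph $G=(V,E)$ and $k\ge 1$, the $k$-total cut complex $\Delta_k^t(G)$ is the simplicial complex on $V$ whose facets are the sets $V\setminus S$ where $S$ ranges over independent sets of $G$ of size $k$; equivalently, $\sigma\subseteq V$ is a face iff $V\setminus\sigma$ contains an independent set of size $k$. *)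

(* Defs.v *)
From mathcomp Require Import all_boot.
Set Implicit Arguments. Unset Strict Implicit. Unset Printing Implicit Defensive.

(* Vertex set [n] = {1,...,n} is modelled by 'I_n = {0,...,n-1} (shift by one). *)

Definition W_adj (n : nat) : rel 'I_n :=
  fun i j => [|| val j == (val i + 1) %% n, val j == (val i + 2) %% n,
                 val i == (val j + 1) %% n | val i == (val j + 2) %% n].

Definition independent (T : finType) (e : rel T) (S : {set T}) : Prop :=
  forall x y, x \in S -> y \in S -> x != y -> ~~ e x y.

Definition k_independent (T : finType) (e : rel T) (k : nat) (S : {set T}) : Prop :=
  independent e S /\ #|S| = k.

Definition total_cut_face (T : finType) (e : rel T) (k : nat) (sigma : {set T}) : Prop :=
  exists S : {set T}, k_independent e k S /\ sigma \subset ~: S.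

(* Main.v *)
Require Import Defs.
From mathcomp Require Import all_boot zify.
Set Implicit Arguments. Unset Strict Implicit. Unset Printing Implicit Defensive.


Definition cdist (n x y : nat) := if x <= y then y - x else y + n - x.
Definition good (n x y : nat) := (3 <= cdist n x y) && (cdist n x y <= n - 3).
Definition spaced n (S : {set 'I_n}) :=
  forall x y : 'I_n, x \in S -> y \in S -> x != y -> good n x y.

Lemma ord_gt0 n (i : 'I_n) : 0 < n.
Proof. by case: n i => [[]|]. Qed.

Definition rotn n (s : nat) (i : 'I_n) : 'I_n := Ordinal (ltn_pmod (i + s) (ord_gt0 i)).

Lemma rotn_val n s (i : 'I_n) : val (rotn s i) = (i + s) %% n.
Proof. by []. Qed.

Lemma modn_2n v n : 0 < n -> v < 2 * n -> v %% n = if v < n then v else v - n.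
Proof.
move=> n0 hv; case: ifP => h; first by rewrite modn_small.
have e : v = (v - n) + n by lia.
by rewrite e modnDr modn_small; lia.
Qed.

Lemma rotn_inj n s : injective (@rotn n s).
Proof.
move=> a b /(congr1 val); rewrite !rotn_val => /eqP.
rewrite eqn_modDr => /eqP; rewrite !modn_small // => e; exact: val_inj.
Qed.

Lemma good_rot n s (x y : 'I_n) : good n (rotn s x) (rotn s y) = good n x y.
Proof.
have n0 := ord_gt0 x.
rewrite !rotn_val -(modnDmr x) -(modnDmr y).
have ht : s %% n < n := ltn_pmod s n0.
have hx := ltn_ord x; have hy := ltn_ord y.
rewrite (@modn_2n (x + s %% n) n n0); last lia.
rewrite (@modn_2n (y + s %% n) n n0); last lia.
rewrite /good /cdist.
case: (ltnP (x + s %% n) n) => h1; case: (ltnP (y + s %% n) n) => h2;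
case: (leqP x y) => h3;
case: ifP => h4; apply/idP/idP => /andP[h5 h6]; apply/andP; split; lia.
Qed.

Lemma rot_reduce n s m (A : {set 'I_n}) :
  (exists S : {set 'I_n}, S \subset (rotn s @^-1: A) /\ #|S| = m /\ spaced S) ->
  exists S : {set 'I_n}, S \subset A /\ #|S| = m /\ spaced S.
Proof.
move=> [S [sub [cS sp]]]; exists (rotn s @: S); split; last split.
- apply/subsetP => x /imsetP [y yS ->].
  by move/subsetP: sub => /(_ y yS); rewrite inE.
- by rewrite card_imset //; exact: rotn_inj.
- move=> x y /imsetP [a aS ->] /imsetP [b bS ->] neq.
  rewrite good_rot; apply: sp => //; apply: contra neq => /eqP -> //.
Qed.

Lemma card_vals_le n (B : {set 'I_n}) (l : seq nat) :
  (forall i, i \in B -> nat_of_ord i \in l) -> #|B| <= size l.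
Proof.
move=> H; rewrite cardE -(size_map (@nat_of_ord n)); apply: uniq_leq_size.
  by rewrite map_inj_uniq ?enum_uniq //; exact: val_inj.
by move=> v /mapP [i Hi ->]; apply: H; rewrite -mem_enum.
Qed.

Lemma LL j : forall n (A : {set 'I_n}), 3 * j - 2 <= #|A| ->
  exists S : {set 'I_n}, S \subset A /\ #|S| = j /\
   (forall x y : 'I_n, x \in S -> y \in S -> x < y -> x + 3 <= y).
Proof.
elim: j => [|j IH] n A hA.
  exists set0; split; first exact: sub0set.
  by split; [rewrite cards0 | move=> x y; rewrite inE].
have : 0 < #|A| by lia.
case/card_gt0P => a0 a0A.
case: (arg_minnP (fun i : 'I_n => nat_of_ord i) a0A) => a aA amin.
pose A1 := A :&: [set i : 'I_n | a + 3 <= i].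
have c1 : #|A :\: [set i : 'I_n | a + 3 <= i]| <= 3.
  apply: (@card_vals_le _ _ [:: nat_of_ord a; a + 1; a + 2]) => i.
  rewrite !inE => /andP [h1 h2]; have := amin i h2; lia.
have := cardsID [set i : 'I_n | a + 3 <= i] A.
move=> ce.
have hA1 : 3 * j - 2 <= #|A1| by rewrite /A1; move: hA; rewrite -ce; move: c1; set X := #|A :\: _|; set Y := #|A :&: _|; lia.
have [S1 [sub1 [cS1 sp1]]] := IH n A1 hA1.
have aS1 : a \notin S1.
  apply/negP => /(subsetP sub1); rewrite !inE; lia.
exists (a |: S1); split; last split.
- rewrite subUset sub1set; apply/andP; split; first exact: aA.
  apply: subset_trans sub1 _; exact: subsetIl.
- by rewrite cardsU1 aS1 cS1.
- have inA1 : forall x, x \in S1 -> a + 3 <= x.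
    by move=> x /(subsetP sub1); rewrite !inE => /andP[].
  move=> x y; rewrite !inE => /predU1P [->|hx] /predU1P [->|hy] hlt.
  + lia.
  + by apply: inA1.
  + have := inA1 _ hx; lia.
  + exact: sp1.
Qed.

Lemma caseI k n (A : {set 'I_n})
  (IH : forall n', 3 * k + 1 <= n' -> forall A' : {set 'I_n'}, 3 * k - 2 <= #|A'| ->
        exists S : {set 'I_n'}, S \subset A' /\ #|S| = k /\ spaced S) :
  3 * k + 4 <= n -> 3 * k + 1 <= #|A| -> (forall i : 'I_n, n - 3 <= i -> i \in A) ->
  exists S : {set 'I_n}, S \subset A /\ #|S| = k.+1 /\ spaced S.
Proof.
move=> hn hA hT.
have n3 : n - 3 <= n := leq_subr 3 n.
pose w := widen_ord n3.
have winj : injective w by move=> a b /(congr1 val) /= e; apply: val_inj.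
pose A' := [set i : 'I_(n - 3) | w i \in A].
have c1 : #|A :\: [set i : 'I_n | i < n - 3]| <= 3.
  apply: (@card_vals_le _ _ [:: n - 3; n - 2; n - 1]) => i.
  rewrite !inE => /andP [h1 h2]; have := ltn_ord i; lia.
have c2 : #|A :&: [set i : 'I_n | i < n - 3]| <= #|A'|.
  rewrite -(card_imset _ winj); apply: subset_leq_card; apply/subsetP => i.
  rewrite !inE => /andP [h1 h2]; apply/imsetP; exists (Ordinal h2).
    by rewrite inE; have -> : w (Ordinal h2) = i by apply: val_inj.
  by apply: val_inj.
have ce := cardsID [set i : 'I_n | i < n - 3] A.
have hA' : 3 * k - 2 <= #|A'|.
  move: hA; rewrite -ce; move: c1 c2.
  set X := #|A :\: _|; set Y := #|A :&: _|; lia.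
have [S' [sub [cS sp]]] := IH (n - 3) ltac:(lia) A' hA'.
pose m := \max_(s in S') nat_of_ord s.
have hm : m <= n - 4 by apply/bigmax_leqP => s _; have := ltn_ord s; lia.
have hs : forall s, s \in S' -> (s <= m) /\ (m - s <= n - 6).
  move=> s sS; split; first exact: leq_bigmax_cond.
  have H0 : 0 < #|S'| by apply/card_gt0P; exists s.
  have [t tS mt] := eq_bigmax_cond (@nat_of_ord _) H0; rewrite -/m in mt.
  case: (eqVneq s t) => [->|st]; first lia.
  have := sp s t sS tS st; rewrite /good /cdist; case: ifP; lia.
have zlt : maxn (n - 3) (m + 3) < n by lia.
pose z : 'I_n := Ordinal zlt.
have zS : z \notin w @: S'.
  apply/negP => /imsetP [s _ /(congr1 val) /=]; have := ltn_ord s; lia.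
exists (z |: w @: S'); split; last split.
- rewrite subUset sub1set; apply/andP; split; first by apply: hT => /=; lia.
  apply/subsetP => i /imsetP [s sS ->]; move/subsetP: sub => /(_ s sS); by rewrite inE.
- by rewrite cardsU1 zS card_imset // cS.
- have gz : forall s, s \in S' -> good n z (w s) && good n (w s) z.
    move=> s sS; have [h1 h2] := hs s sS.
    have k1 : 1 <= k by rewrite -cS; apply/card_gt0P; exists s.
    have := ltn_ord s.
    rewrite /good /cdist /= => hs'.
    case: ifP => a1; case: ifP => a2; rewrite ?andbT; apply/andP; split;
      apply/andP; split; lia.
  move=> x y; rewrite !inE => /predU1P [->|hx] /predU1P [->|hy] neq.
  + by rewrite eqxx in neq.
  + by case/imsetP: hy => s sS ->; case/andP: (gz s sS).
  + by case/imsetP: hx => s sS ->; case/andP: (gz s sS).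
  + case/imsetP: hx => a aS ea; case/imsetP: hy => b bS eb; subst x y.
    have ab : a != b by apply: contra neq => /eqP ->.
    have ba : b != a by rewrite eq_sym.
    have := sp a b aS bS ab; have := sp b a bS aS ba.
    have := ltn_ord a; have := ltn_ord b.
    rewrite /good /cdist /= => la lb.
    case: ifP => a1; case: ifP => a2; move=> /andP [h1 h2] /andP [h3 h4];
      apply/andP; split; lia.
Qed.

Lemma caseII k n (A : {set 'I_n}) :
  3 * k + 4 <= n -> 3 * k + 1 <= #|A| ->
  (forall i : 'I_n, nat_of_ord i = 0 -> i \in A) ->
  (forall i : 'I_n, nat_of_ord i = n - 1 -> i \notin A) ->
  (forall i j : 'I_n, nat_of_ord i = 1 -> nat_of_ord j = 2 -> i \in A -> j \in A -> False) ->
  exists S : {set 'I_n}, S \subset A /\ #|S| = k.+1 /\ spaced S.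
Proof.
move=> hn hA h0 h1 h12.
pose P := [set i : 'I_n | 3 <= i <= n - 3].
have c1 : #|A :\: P| <= 3.
  case: (boolP [exists i in A, nat_of_ord i == 1]).
  - case/exists_inP => i1 i1A /eqP e1.
    apply: (@card_vals_le _ _ [:: 0; 1; n - 2]) => i.
    rewrite !inE => /andP [h2 h3].
    have li := ltn_ord i.
    have f1 := h1 i; have f2 := fun e => h12 i1 i e1 e i1A h3.
    case: (nat_of_ord i =P n - 1) => [e|ne1]; first by move: (f1 e); rewrite h3.
    case: (nat_of_ord i =P 2) => [e|ne2]; first by case: (f2 e).
    lia.
  - move=> /exists_inPn hn1.
    apply: (@card_vals_le _ _ [:: 0; 2; n - 2]) => i.
    rewrite !inE => /andP [h2 h3].
    have li := ltn_ord i; have f1 := hn1 i h3; have f2 := h1 i.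
    case: (nat_of_ord i =P n - 1) => [e|ne1]; first by move: (f2 e); rewrite h3.
    lia.
have ce := cardsID P A.
have hA' : 3 * k - 2 <= #|A :&: P|.
  move: hA; rewrite -ce; move: c1.
  set X := #|A :\: _|; set Y := #|A :&: _|; lia.
have [S [sub [cS sp]]] := LL hA'.
have n0 : 0 < n by lia.
pose o : 'I_n := Ordinal n0.
have inP : forall s, s \in S -> 3 <= s <= n - 3.
  by move=> s /(subsetP sub); rewrite !inE => /andP [_].
have oS : o \notin S by apply/negP => /inP /=.
exists (o |: S); split; last split.
- rewrite subUset sub1set; apply/andP; split; first by apply: h0.
  apply: subset_trans sub _; exact: subsetIl.
- by rewrite cardsU1 oS cS.
- have go : forall s, s \in S -> good n o s && good n s o.
    move=> s sS; case/andP: (inP s sS) => l1 l2; rewrite /good /cdist /=.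
    (repeat case: ifP => ?); apply/andP; split; apply/andP; split; lia.
  move=> x y; rewrite !inE => /predU1P [->|hx] /predU1P [->|hy] neq.
  + by rewrite eqxx in neq.
  + by case/andP: (go y hy).
  + by case/andP: (go x hx).
  + have := inP x hx; have := inP y hy.
    have : nat_of_ord x != nat_of_ord y by [].
    case: (ltngtP x y) => [lt|lt|e]; last by rewrite ?e ?eqxx.
    * have := sp x y hx hy lt. rewrite /good /cdist; case: ifP; lia.
    * have := sp y x hy hx lt. rewrite /good /cdist; case: ifP; lia.
Qed.

Lemma main k : forall n, 3 * k + 1 <= n -> forall A : {set 'I_n}, 3 * k - 2 <= #|A| ->
  exists S : {set 'I_n}, S \subset A /\ #|S| = k /\ spaced S.
Proof.
elim: k => [|k IH] n hn A hA.
  exists set0; split; first exact: sub0set.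
  by split; [rewrite cards0 | move=> x y; rewrite inE].
case: (boolP [exists x : 'I_n, [&& x \in A, rotn 1 x \in A & rotn 2 x \in A]]).
- case/existsP => x /and3P [h0 h1 h2].
  apply: (@rot_reduce n (x + 3)); apply: caseI IH _ _ _.
  + lia.
  + rewrite card_preimset; [lia | exact: rotn_inj].
  move=> i hi; rewrite inE.
  have li := ltn_ord i; have lx := ltn_ord x.
  have : (nat_of_ord i = n - 3) \/ (nat_of_ord i = n - 2) \/ (nat_of_ord i = n - 1) by lia.
  case=> [e|[e|e]].
  + have -> : rotn (x + 3) i = x; last by [].
    apply: val_inj; rewrite rotn_val e (_ : n - 3 + (x + 3) = x + n); last lia.
    by rewrite modnDr modn_small.
  + have -> : rotn (x + 3) i = rotn 1 x; last by [].
    apply: val_inj; rewrite !rotn_val e (_ : n - 2 + (x + 3) = (x + 1) + n) ?modnDr //; lia.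
  + have -> : rotn (x + 3) i = rotn 2 x; last by [].
    apply: val_inj; rewrite !rotn_val e (_ : n - 1 + (x + 3) = (x + 2) + n) ?modnDr //; lia.
- move=> /existsPn nt.
  have : 0 < #|A| by lia.
  case/card_gt0P => a aA.
  have [y [yA yp]] : exists y, y \in A /\ rotn (n - 1) y \notin A.
    case: (boolP (rotn (n - 1) a \in A)) => ha; last by exists a.
    exists (rotn (n - 1) a); split => //.
    apply/negP => hb.
    have la := ltn_ord a.
    have := nt (rotn (n - 1) (rotn (n - 1) a)); rewrite hb /=.
    have -> : rotn 1 (rotn (n - 1) (rotn (n - 1) a)) = rotn (n - 1) a.
      apply: val_inj; rewrite !rotn_val !modnDml.
      rewrite -addnA modnDml (_ : a + (n - 1) + (n - 1 + 1) = a + (n - 1) + n) ?modnDr //; lia.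
    have -> : rotn 2 (rotn (n - 1) (rotn (n - 1) a)) = a.
      apply: val_inj; rewrite !rotn_val !modnDml.
      rewrite -addnA modnDml (_ : a + (n - 1) + (n - 1 + 2) = a + n + n) ?modnDr ?modn_small //; lia.
    by rewrite ha aA.
  have ly := ltn_ord y.
  apply: (@rot_reduce n y); apply: caseII.
  + lia.
  + rewrite card_preimset; [lia | exact: rotn_inj].
  + move=> i e; rewrite inE.
    by have -> : rotn y i = y by apply: val_inj; rewrite rotn_val e add0n modn_small.
  + move=> i e; rewrite inE.
    by have -> : rotn y i = rotn (n - 1) y by apply: val_inj; rewrite !rotn_val e addnC.
  + move=> i j ei ej; rewrite !inE.
    have -> : rotn y i = rotn 1 y by apply: val_inj; rewrite !rotn_val ei addnC.
    have -> : rotn y j = rotn 2 y by apply: val_inj; rewrite !rotn_val ej addnC.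
    move=> h1 h2; have := nt y; by rewrite yA h1 h2.
Qed.

Lemma good_nadj n (x y : 'I_n) : good n x y -> ~~ W_adj x y.
Proof.
rewrite /good /cdist /W_adj /= => /andP [].
have lx := ltn_ord x; have ly := ltn_ord y.
have n0 : 0 < n by lia.
case: ifP => c h1 h2;
rewrite (@modn_2n (x + 1) n n0) ?(@modn_2n (x + 2) n n0) ?(@modn_2n (y + 1) n n0)
  ?(@modn_2n (y + 2) n n0); try lia;
(repeat case: ifP => ?); apply/negP; case/or4P => /eqP ?; lia.
Qed.

Unset Implicit Arguments.

Theorem lemma3p1 (k n : nat) (hk : 1 <= k) (hn : 3 * k + 1 <= n) :
  (forall A : {set 'I_n}, #|A| = 3 * k - 2 ->
     exists S : {set 'I_n}, S \subset A /\ k_independent (@W_adj n) k S)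
  /\
  (forall sigma : {set 'I_n}, #|sigma| <= n - (3 * k) + 2 ->
     total_cut_face (@W_adj n) k sigma).
Proof.
split.
- move=> A hA.
  have [S [sub [cS sp]]] := @main k n hn A ltac:(lia).
  exists S; split => //; split => // x y xS yS neq; apply: good_nadj; exact: sp.
- move=> sigma hs.
  have hA : 3 * k - 2 <= #|~: sigma|.
    have := cardsCs sigma; rewrite card_ord; lia.
  have [S [sub [cS sp]]] := @main k n hn _ hA.
  exists S; split; last by rewrite subsetC.
  split => // x y xS yS neq; apply: good_nadj; exact: sp.
Qed.
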